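(* Let $p>3$ be a prime and $X=\mathbb{Z}(p)$. Then there exist independent random variables $\xi_1,\xi_2,\xi_3,\xi_4$ with values in $X$ and distributions $\mu_1,\mu_2,\mu_3,\mu_4$ such that the conditional distribution of $L_2=\xi_1+\xi_2+2\xi_3+2\xi_4$ given $L_1=\xi_1+\xi_2+\xi_3+\xi_4$ is symmetric and $\mu_1,\mu_2,\mu_3,\mu_4\notin I(X)$.
   Context: $\mathbb{Z}(p)$ is the cyclic group of order $p$. $I(X)$ is the set of shifts of Haar distributions $m_K$ of subgroups $K$ of $X$. For random variables $L_1,L_2$ with values in $X$, the conditional distribution of $L_2$ given $L_1$ is called symmetric if the pairs $(L_1,L_2)$ and $(L_1,-L_2)$ are identically distributed. *)

(* Defs.v *)
From HB Require Import structures.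
From mathcomp Require Import all_boot all_order all_algebra.
Set Implicit Arguments. Unset Strict Implicit. Unset Printing Implicit Defensive.
Import Order.TTheory GRing.Theory Num.Theory.
Local Open Scope ring_scope.

Definition is_distribution (R : numDomainType) (T : finType) (mu : T -> R) : Prop :=
  (forall x, 0 <= mu x) /\ \sum_(x : T) mu x = 1.

Definition is_subgroup (X : finZmodType) (K : {set X}) : Prop :=
  0 \in K /\ (forall x y, x \in K -> y \in K -> x - y \in K).

(* mu \in I(X): mu is a shift of the Haar distribution m_K of a subgroup K. *)
Definition in_I (R : numFieldType) (X : finZmodType) (mu : X -> R) : Prop :=
  exists (K : {set X}) (x : X), is_subgroup K /\
    forall y, mu y = if (y - x) \in K then (#|K|%:R)^-1 else 0.

Definition joint_L (R : numDomainType) (X : finZmodType)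
  (mu1 mu2 mu3 mu4 : X -> R) (a b : X) : R :=
  \sum_(x1 : X) \sum_(x2 : X) \sum_(x3 : X) \sum_(x4 : X)
    (if (x1 + x2 + x3 + x4 == a) && (x1 + x2 + x3 *+ 2 + x4 *+ 2 == b)
     then mu1 x1 * mu2 x2 * mu3 x3 * mu4 x4 else 0).

(* The conditional distribution of L2 given L1 is symmetric:
   (L1, L2) and (L1, -L2) are identically distributed. *)
Definition cond_symmetric (R : numDomainType) (X : finZmodType)
  (mu1 mu2 mu3 mu4 : X -> R) : Prop :=
  forall a b : X, joint_L mu1 mu2 mu3 mu4 a b = joint_L mu1 mu2 mu3 mu4 a (- b).

(* Main.v *)
Require Import Defs.
From HB Require Import structures.
From mathcomp Require Import all_boot all_order all_algebra.
From mathcomp Require Import complex ring lra.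
Set Implicit Arguments. Unset Strict Implicit.
Import Order.TTheory GRing.Theory Num.Theory.
Local Open Scope ring_scope.

Lemma exists_root (R : rcfType) (p : nat) (hp : prime p) (hp3 : (3 < p)%N) :
  exists z : R[i], p.-primitive_root z.
Proof.
have p1 : (1 < p)%N by apply: prime_gt1.
pose P : {poly R[i]} := \poly_(i < p) 1.
have sP : size P = p.
  by rewrite size_poly_eq // oner_eq0.
have [z rz] : exists z, root P z.
  by apply/closed_rootP; rewrite sP; case: p p1 {hp hp3 sP P} => [|[]].
have hz : z ^+ p = 1.
  apply/eqP; rewrite -subr_eq0 subrX1; apply/eqP.
  move/eqP: rz; rewrite horner_poly; under eq_bigr do rewrite mul1r; by move=> ->; rewrite mulr0.
have z1 : z != 1.
  apply/eqP=> e; move: rz; rewrite /root horner_poly e.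
  under eq_bigr do rewrite expr1n mulr1.
  by rewrite sumr_const card_ord pnatr_eq0 => /eqP p0; rewrite p0 in p1.
have [m pm mp] := prim_order_exists (prime_gt0 hp) hz.
case/primeP: hp => _ /(_ m mp) /orP [] /eqP em; last by exists z; rewrite -em.
by move: pm; rewrite em => /prim_expr_order; rewrite expr1 => /eqP; rewrite (negbTE z1).
Qed.

Section E.
Variables (F : fieldType) (p : nat).
Local Notation N := (Zp_trunc p).+2.
Definition E (w : F) (x : 'Z_p) : F := w ^+ (nat_of_ord x).

Lemma E_mod (w : F) n : w ^+ N = 1 -> w ^+ (n %% N) = w ^+ n.
Proof. by move=> hw; rewrite {2}(divn_eq n N) exprD mulnC exprM hw expr1n mul1r. Qed.

Lemma E_add w x y : w ^+ N = 1 -> E w (x + y) = E w x * E w y.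
Proof. by move=> hw; rewrite /E -exprD /= E_mod. Qed.

Lemma E_sub w x y : w ^+ N = 1 -> E w (x - y) = E w x / E w y.
Proof.
move=> hw; have w0 : w != 0.
  by apply/eqP=> w0; move: hw; rewrite w0 expr0n /= => /eqP; rewrite eq_sym oner_eq0.
have ey : E w y != 0 by rewrite expf_neq0.
rewrite -[in E w x](subrK y x). by rewrite [E w (x - y + y)]E_add // mulfK.
Qed.

Lemma E_sum w : w ^+ N = 1 -> w != 1 -> \sum_(x : 'Z_p) E w x = 0.
Proof.
move=> hw w1; have : (w - 1) * \sum_(i < N) w ^+ i = 0 by rewrite -subrX1 hw subrr.
by move/eqP; rewrite mulf_eq0 subr_eq0 (negbTE w1) /= => /eqP.
Qed.

Lemma conv0 a b t : a ^+ N = 1 -> b ^+ N = 1 -> a / b != 1 ->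
  \sum_(x : 'Z_p) E a x * E b (t - x) = 0.
Proof.
move=> ha hb hab.
under eq_bigr do rewrite E_sub // mulrCA /E -exprVn -exprMn -/(E (a / b) _).
rewrite -mulr_sumr E_sum ?mulr0 //.
by rewrite exprMn exprVn ha hb invr1 mulr1.
Qed.
End E.

Section Cx.
Local Open Scope complex_scope.
Variables (R : rcfType) (p : nat).
Local Notation N := (Zp_trunc p).+2.

Lemma conj_root (z : R[i]) : z ^+ N = 1 -> (z^*)%C = z^-1.
Proof.
move=> hz.
have n1 : `|z| = 1.
  apply/eqP; rewrite -(@pexpr_eq1 _ _ N) //; apply/eqP.
  by rewrite -normrX hz normr1.
have z0 : z != 0 by rewrite -normr_eq0 n1 oner_eq0.
by rewrite -[RHS]mulr1 -(expr1n _ 2) -n1 sqr_normc mulKf.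
Qed.

Definition c (w : R[i]) (x : 'Z_p) : R := @complex.Re R (E w x).

Lemma cC w x : w ^+ N = 1 -> (c w x)%:C = (E w x + E w^-1 x) / 2%:R.
Proof.
move=> hw; rewrite /c ReJ_add /E; congr ((_ + _) / _).
by rewrite conj_root ?exprVn // exprAC hw expr1n.
Qed.

Lemma c_sum w : w ^+ N = 1 -> w != 1 -> \sum_x c w x = 0.
Proof.
move=> hw w1; apply: (@complexI R); rewrite rmorph_sum rmorph0 /=.
under eq_bigr do rewrite cC //.
rewrite -mulr_suml big_split /= !E_sum ?addr0 ?mul0r //.
  by rewrite exprVn hw invr1.
by rewrite invr_eq1.
Qed.

Lemma c_conv (z : R[i]) t : z ^+ N = 1 -> z != 1 -> z ^+ 3 != 1 ->
  \sum_x c z x * c (z ^+ 2) (t - x) = 0.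
Proof.
move=> hz z1 z3.
have z0 : z != 0.
  by apply/eqP=> z0; move: hz; rewrite z0 expr0n /= => /eqP; rewrite eq_sym oner_eq0.
have hz2 : (z ^+ 2) ^+ N = 1 by rewrite exprAC hz expr1n.
have hzV : (z^-1) ^+ N = 1 by rewrite exprVn hz invr1.
have hz2V : ((z ^+ 2)^-1) ^+ N = 1 by rewrite exprVn hz2 invr1.
have r1 : z / z ^+ 2 != 1.
  have -> : z / z ^+ 2 = z^-1 by field.
  by rewrite invr_eq1.
have r2 : z / (z ^+ 2)^-1 != 1.
  by have -> : z / (z ^+ 2)^-1 = z ^+ 3 by field.
have r3 : z^-1 / z ^+ 2 != 1.
  have -> : z^-1 / z ^+ 2 = (z ^+ 3)^-1 by field.
  by rewrite invr_eq1.
have r4 : z^-1 / (z ^+ 2)^-1 != 1.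
  by have -> : z^-1 / (z ^+ 2)^-1 = z by field.
apply: (@complexI R); rewrite rmorph_sum rmorph0 /=.
have key : forall A A' B B' : R[i],
    (A + A') / 2%:R * ((B + B') / 2%:R) = 4%:R^-1 * (A * B + A * B' + (A' * B + A' * B')).
  by move=> *; field.
under eq_bigr do rewrite rmorphM /= !cC // key.
rewrite -mulr_sumr !big_split /= !conv0 // !addr0 mulr0 //.
Qed.
End Cx.

Section D.
Variables (R : rcfType) (p : nat).
Local Notation N := (Zp_trunc p).+2.

Definition Kc (c : 'Z_p -> R) : R := 1 + \sum_y `|c y|.
Definition mk (c : 'Z_p -> R) (x : 'Z_p) : R := (Kc c + c x) / (N%:R * Kc c).

Lemma Kc_gt0 c : 0 < Kc c.
Proof. by rewrite /Kc ltr_wpDr ?sumr_ge0. Qed.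

Lemma mk_gt0 c x : 0 < mk c x.
Proof.
rewrite /mk divr_gt0 ?mulr_gt0 ?Kc_gt0 ?ltr0n //.
have h1 : `|c x| <= \sum_y `|c y|.
  by rewrite (bigD1 x) //= lerDl sumr_ge0.
have h2 : - c x <= `|c x| by rewrite -normrN ler_norm.
rewrite /Kc; lra.
Qed.

Lemma mk_dist c : \sum_x c x = 0 -> is_distribution (mk c).
Proof.
move=> hc; split=> [x|]; first exact/ltW/mk_gt0.
rewrite /mk -mulr_suml big_split /= hc addr0 sumr_const card_ord -[Kc c *+ N]mulr_natl.
by rewrite divff // mulf_neq0 ?pnatr_eq0 // gt_eqF ?Kc_gt0.
Qed.

Lemma mk_notI c : \sum_x c x = 0 -> c 0 = 1 -> ~ in_I (mk c).
Proof.
move=> hc c0 [K [x0 [_ hK]]].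
have hin y : y - x0 \in K.
  by move: (mk_gt0 c y); rewrite hK; case: ifP => // _; rewrite ltxx.
have hconst y : c y = 1.
  have : mk c y = mk c 0 by rewrite !hK !hin.
  rewrite /mk c0 => /(congr1 (fun r => r * (N%:R * Kc c))).
  rewrite !mulfVK ?mulf_neq0 ?pnatr_eq0 ?gt_eqF ?Kc_gt0 //.
  exact: addrI.
move: hc; under eq_bigr do rewrite hconst.
rewrite sumr_const card_ord => h; have := pnatr_eq0 R N; rewrite h eqxx. done.
Qed.

Lemma sum_shift (F : 'Z_p -> R) t : \sum_x F (t - x) = \sum_x F x.
Proof. by rewrite [RHS](reindex_inj (subrI t)). Qed.

Lemma mk_conv c1 c2 t : \sum_x c1 x = 0 -> \sum_x c2 x = 0 ->
  \sum_x c1 x * c2 (t - x) = 0 ->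
  \sum_x mk c1 x * mk c2 (t - x) = N%:R^-1.
Proof.
move=> h1 h2 h12.
have K1 := Kc_gt0 c1; have K2 := Kc_gt0 c2.
have hN : 0 < 2 + (Zp_trunc p)%:R :> R by have := ler0n R (Zp_trunc p); lra.
have e : forall x, mk c1 x * mk c2 (t - x) =
   (Kc c1 * Kc c2 + Kc c1 * c2 (t - x) + Kc c2 * c1 x + c1 x * c2 (t - x))
    / (N%:R * Kc c1 * (N%:R * Kc c2)).
  move=> x; rewrite /mk; move: (c1 x) (c2 (t - x)) => a b.
  by field; rewrite !gt_eqF.
under eq_bigr do rewrite e.
rewrite -mulr_suml !big_split /= h12 -!mulr_sumr sum_shift h1 h2 sumr_const card_ord.
rewrite !mulr0 !addr0.
by field; rewrite !gt_eqF.
Qed.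
End D.

Section J.
Variables (R : rcfType) (p : nat).
Local Notation N := (Zp_trunc p).+2.

Lemma conv_sum (m1 m2 : 'Z_p -> R)
  (h : forall t, \sum_x m1 x * m2 (t - x) = N%:R^-1) (F : 'Z_p -> R) :
  \sum_x3 \sum_x4 m1 x3 * m2 x4 * F (x3 + x4) = N%:R^-1 * \sum_t F t.
Proof.
transitivity (\sum_x3 \sum_t m1 x3 * m2 (t - x3) * F t).
  apply: eq_bigr => x3 _.
  rewrite (reindex_inj (@can_inj _ _ (fun t => t - x3) (fun t => t + x3) (fun t => subrK x3 t))).
  by apply: eq_bigr => t _; rewrite [x3 + _]addrC subrK.
rewrite exchange_big mulr_sumr; apply: eq_bigr => t _.
by rewrite -mulr_suml h.
Qed.

Lemma count1 (a b : 'Z_p) :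
  \sum_t \sum_s (if (s + t == a) && (s + t *+ 2 == b) then 1 else 0 : R) = 1.
Proof.
transitivity (\sum_t (if t == b - a then 1 else 0 : R)).
  apply: eq_bigr => t _.
  rewrite (bigD1 (a - t)) //= big1 ?addr0.
    rewrite subrK eqxx /= mulr2n addrA subrK.
    by rewrite [t == _]eq_sym subr_eq [t + a]addrC eq_sym.
  move=> s /negbTE hs; case: ifP => // /andP [/eqP e _].
  by move: hs; rewrite -e addrK eqxx.
rewrite (bigD1 (b - a)) //= eqxx big1 ?addr0 // => t /negbTE ->.
by [].
Qed.

Lemma ifmul (c1 c2 : bool) (X Y : R) : c1 = c2 -> X = Y ->
  (if c1 then X else 0) = Y * (if c2 then 1 else 0).
Proof. by move=> -> ->; case: c2; rewrite ?mulr1 ?mulr0. Qed.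

Lemma joint_const (m1 m2 : 'Z_p -> R)
  (h : forall t, \sum_x m1 x * m2 (t - x) = N%:R^-1) a b :
  joint_L m1 m2 m1 m2 a b = N%:R^-1 * N%:R^-1.
Proof.
pose G (s u : 'Z_p) : R := if (s + u == a) && (s + u *+ 2 == b) then 1 else 0.
transitivity (\sum_x1 \sum_x2 \sum_x3 \sum_x4
    m1 x3 * m2 x4 * (m1 x1 * m2 x2 * G (x1 + x2) (x3 + x4))).
  apply: eq_bigr => x1 _; apply: eq_bigr => x2 _; apply: eq_bigr => x3 _.
  apply: eq_bigr => x4 _.
  rewrite /G mulrA; refine (ifmul _ _); last by ring.
  by rewrite mulrnDl !addrA.
transitivity (\sum_x1 \sum_x2 N%:R^-1 * \sum_t (m1 x1 * m2 x2 * G (x1 + x2) t)).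
  by apply: eq_bigr => x1 _; apply: eq_bigr => x2 _; rewrite (conv_sum h (fun u => m1 x1 * m2 x2 * G (x1 + x2) u)).
transitivity (N%:R^-1 * \sum_t \sum_x1 \sum_x2 m1 x1 * m2 x2 * G (x1 + x2) t).
  transitivity (\sum_x1 \sum_x2 \sum_t N%:R^-1 * (m1 x1 * m2 x2 * G (x1 + x2) t)).
    by apply: eq_bigr => x1 _; apply: eq_bigr => x2 _; rewrite mulr_sumr.
  transitivity (\sum_t \sum_x1 \sum_x2 N%:R^-1 * (m1 x1 * m2 x2 * G (x1 + x2) t)).
    rewrite [RHS]exchange_big /=; apply: eq_bigr => x1 _.
    by rewrite exchange_big.
  rewrite mulr_sumr; apply: eq_bigr => t _; rewrite mulr_sumr; apply: eq_bigr => x1 _.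
  by rewrite mulr_sumr.
under eq_bigr do rewrite (conv_sum h (fun s => G s _)).
by rewrite -mulr_sumr /G count1 mulr1.
Qed.
End J.

Theorem lemma6 (R : rcfType) (p : nat) (hp : prime p) (hp3 : (3 < p)%N) :
  exists mu1 mu2 mu3 mu4 : 'Z_p -> R,
    [/\ is_distribution mu1, is_distribution mu2,
        is_distribution mu3, is_distribution mu4 &
    [/\ cond_symmetric mu1 mu2 mu3 mu4,
        ~ in_I mu1, ~ in_I mu2, ~ in_I mu3 & ~ in_I mu4]].
Proof.
have p1 : (1 < p)%N by apply: prime_gt1.
have [z pz] := exists_root R hp hp3.
have hz : z ^+ (Zp_trunc p).+2 = 1 by rewrite Zp_cast // prim_expr_order.
have zk : forall k, (0 < k < p)%N -> z ^+ k != 1.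
  move=> k /andP [k0 kp]; rewrite -(expr0 z) (eq_prim_root_expr pz).
  by rewrite mod0n modn_small // -lt0n.
have z1 : z != 1 by rewrite -[z]expr1 zk.
have z2 : z ^+ 2 != 1 by rewrite zk // (ltn_trans _ hp3).
have z3 : z ^+ 3 != 1 by rewrite zk.
have hz2 : (z ^+ 2) ^+ (Zp_trunc p).+2 = 1 by rewrite exprAC hz expr1n.
have s1 := c_sum hz z1.
have s2 := c_sum hz2 z2.
have h t := mk_conv s1 s2 (c_conv t hz z1 z3).
exists (mk (c z)), (mk (c (z ^+ 2))), (mk (c z)), (mk (c (z ^+ 2))).
have n1 := mk_notI s1 (erefl _).
have n2 := mk_notI s2 (erefl _).
split; [exact: mk_dist|exact: mk_dist|exact: mk_dist|exact: mk_dist|].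
split => //.
by move=> a b; rewrite !(joint_const h).
Qed.
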